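(* Let $n\ge 6$ be divisible by $6$. The map $\varphi_{1,n}:\mathcal{P}_{1,n}\to W_n$ is a bijection, and for all $(x,k),(y,l)\in\mathcal{P}_{1,n}$, $$\rho_n((x,k),(y,l))\le 2+2\,d_\infty(\varphi_{1,n}(x,k),\varphi_{1,n}(y,l))$$ and $$d_\infty(\varphi_{1,n}(x,k),\varphi_{1,n}(y,l))\le 6\,\rho_n((x,k),(y,l))+12 .$$ Consequently, for all such pairs, $\tfrac14\rho_n\le d_\infty\circ(\varphi_{1,n}\times\varphi_{1,n})\le 18\,\rho_n$.
   Context: $\mathcal{G}_n=\mathbb{Z}_2\wr\mathbb{Z}_n$ is the set of pairs $(x,k)$ with $x\subseteq\mathbb{Z}_n$, $k\in\mathbb{Z}_n$; $\rho_n$ is the shortest-path metric of the graph on $\mathcal{G}_n$ in which $(x,k)$ is adjacent to $(x,k+1)$ and to $(x\triangle\{k+1\},k+1)$ (edges undirected; this is the Cayley graph with generators $t=(\emptyset,1)$, $ta=(\{1\},1)$). Identify $\mathbb{Z}_n$ with $\{0,1,\dots,n-1\}$. Let $P_1=\{n/6,n/6+1,\dots,5n/6\}\subseteq\mathbb{Z}_n$ and $\mathcal{P}_{1,n}=\{(x,k)\in\mathcal{G}_n: k\in P_1\}$ with the metric $\rho_n$ restricted. $T_n$ is the binary tree of depth $n$: its vertices are the $0/1$ sequences of length $\le n$ (including the empty one), with $A$ adjacent to $A$ extended by one symbol, and $d_T$ its graph metric; $|A|$ is the length of $A$. On $T_n\times T_n$ let $d_\infty((A_1,A_2),(B_1,B_2))=\max\{d_T(A_1,B_1),d_T(A_2,B_2)\}$,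 and $W_n=\{(A_1,A_2)\in T_n\times T_n: |A_1|+|A_2|=n,\ |A_1|,|A_2|\in[n/6,5n/6]\}$. Define $\varphi_{1,n}(x,k)=(A_1,A_2)$ where $A_1=(a_{1,0},\dots,a_{1,k-1})$ has length $k$ with $a_{1,j}=1$ iff $j\in x$, and $A_2=(a_{2,1},\dots,a_{2,n-k})$ has length $n-k$ with $a_{2,i}=1$ iff $n-i\in x$. *)

(* Defs.v *)
From mathcomp Require Import all_boot.
Set Implicit Arguments. Unset Strict Implicit. Unset Printing Implicit Defensive.

Fixpoint walk (T : finType) (e : rel T) (m : nat) (x y : T) : bool :=
  match m with
  | 0 => x == y
  | m'.+1 => [exists z, e x z && walk e m' z y]
  end.

(* shortest-path distance: the least m with a walk of length m from x to y.
   (Convention: #|T| if y is unreachable from x; never used here since the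
   graphs considered are connected, so every distance is < #|T|.) *)
Definition gdist (T : finType) (e : rel T) (x y : T) : nat :=
  find (fun m => walk e m x y) (iota 0 #|T|).

Definition Gn (n : nat) : finType := ({set 'I_n} * 'I_n)%type.

Definition symdiff (n : nat) (A B : {set 'I_n}) : {set 'I_n} :=
  (A :|: B) :\: (A :&: B).

Definition gstep (n : nat) (p q : Gn n) : bool :=
  (q.2 == ordS p.2) && ((q.1 == p.1) || (q.1 == symdiff p.1 [set q.2])).

Definition gadj (n : nat) : rel (Gn n) := fun p q => gstep p q || gstep q p.

Definition rho (n : nat) (p q : Gn n) : nat := gdist (@gadj n) p q.

Definition inP1 (n : nat) (k : nat) : bool := (n %/ 6 <= k) && (k <= 5 * (n %/ 6)).
Definition P1n (n : nat) (p : Gn n) : bool := inP1 n p.2.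

(* vertices: 0/1 sequences of length <= n, as a dependent pair (length, tuple) *)
Definition Tn (n : nat) : finType := {k : 'I_n.+1 & k.-tuple bool}.

Definition tseq (n : nat) (A : Tn n) : seq bool := val (tagged A).

Definition tlen (n : nat) (A : Tn n) : nat := size (tseq A).

Definition tadj (n : nat) : rel (Tn n) := fun A B =>
  [exists b : bool, tseq B == rcons (tseq A) b] ||
  [exists b : bool, tseq A == rcons (tseq B) b].

Definition dT (n : nat) (A B : Tn n) : nat := gdist (@tadj n) A B.

Definition dinf (n : nat) (P Q : Tn n * Tn n) : nat :=
  maxn (dT P.1 Q.1) (dT P.2 Q.2).

Definition Wn (n : nat) (P : Tn n * Tn n) : bool :=
  [&& tlen P.1 + tlen P.2 == n, inP1 n (tlen P.1) & inP1 n (tlen P.2)].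

(* build a tree vertex from a sequence (meant for sequences of size <= n) *)
Definition mkT (n : nat) (s : seq bool) : Tn n :=
  @Tagged _ (@inord n (size s)) (fun k : 'I_n.+1 => k.-tuple bool)
     [tuple nth false s i | i < @inord n (size s)].

Definition memZ (n : nat) (x : {set 'I_n}) (j : nat) : bool :=
  [exists i : 'I_n, (val i == j) && (i \in x)].

Definition phi1 (n : nat) (p : Gn n) : Tn n * Tn n :=
  (mkT n [seq memZ p.1 j | j <- iota 0 p.2],
   mkT n [seq memZ p.1 (n - i) | i <- iota 1 (n - p.2)]).

(* Main.v *)
Require Import Defs.
From mathcomp Require Import all_boot zify.
Set Implicit Arguments. Unset Strict Implicit. Unset Printing Implicit Defensive.

Section Graph.
Variables (T : finType) (e : rel T).

Lemma walkP m x y :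
  reflect (exists p, [/\ size p = m, path e x p & last x p = y]) (walk e m x y).
Proof.
elim: m x => [|m IH] x /=.
  apply: (iffP eqP) => [->|[[|z p] [//= _ _ ->]]]; first by exists [::].
apply: (iffP existsP) => [[z /andP[exz /IH[p [sp pp lp]]]]|[[|z p] [//= [sp] /andP[exz pp] lp]]].
  by exists (z :: p); rewrite /= exz sp.
by exists z; rewrite exz; apply/IH; exists p.
Qed.

Lemma walk_short m x y : walk e m x y ->
  exists2 m', m' <= m & (m' < #|T|) && walk e m' x y.
Proof.
move=> /walkP[p [sp pp lp]].
rewrite -lp -sp.
case: (shortenP pp) => p' pp' up' sub.
exists (size p').
  by apply: uniq_leq_size => //; case/andP: up'.
apply/andP; split; last by apply/walkP; exists p'.
have := max_card (mem (x :: p')).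
by move/card_uniqP: up' => ->.
Qed.

Lemma gdist_le m x y : walk e m x y -> gdist e x y <= m.
Proof.
case/walk_short => m' le /andP[lt w].
apply: leq_trans le; rewrite leqNgt; apply/negP => H.
by have := before_find 0 H; rewrite nth_iota ?add0n // w.
Qed.

Lemma gdist_walk m x y : walk e m x y -> walk e (gdist e x y) x y.
Proof.
case/walk_short => m' le /andP[lt w].
have hh : has (fun m => walk e m x y) (iota 0 #|T|).
  by apply/hasP; exists m' => //; rewrite mem_iota.
have := nth_find 0 hh.
rewrite nth_iota ?add0n //.
by rewrite -[X in _ < X](size_iota 0) -has_find.
Qed.

Lemma walk_cat m1 m2 x y z : walk e m1 x y -> walk e m2 y z -> walk e (m1 + m2) x z.
Proof.
elim: m1 x => [|m IH] x /=; first by move/eqP->.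
case/existsP=> w /andP[exw wm] wz; apply/existsP; exists w.
by rewrite exw IH.
Qed.

Hypothesis esym : symmetric e.

Lemma walk_sym m x y : walk e m x y -> walk e m y x.
Proof.
elim: m x y => [|m IH] x y /=; first by rewrite eq_sym.
case/existsP=> w /andP[exw wm].
have := walk_cat (IH _ _ wm) (_ : walk e 1 w x).
rewrite addn1; apply; apply/existsP; exists x; rewrite esym exw /=.
by [].
Qed.

Lemma walk_lip (f : T -> nat) : (forall a b, e a b -> f a <= f b + 1) ->
  forall m x y, walk e m x y -> f x <= f y + m.
Proof.
move=> H; elim=> [|m IH] x y /=; first by move/eqP->; rewrite addn0.
case/existsP=> w /andP[exw wm].
have := H _ _ exw; have := IH _ _ wm; lia.
Qed.
End Graph.

Fixpoint lcp (s t : seq bool) : nat :=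
  match s, t with
  | a :: s', b :: t' => if a == b then (lcp s' t').+1 else 0
  | _, _ => 0
  end.

Definition tdist (s t : seq bool) := size s + size t - 2 * lcp s t.

Lemma lcp_size s t : lcp s t <= minn (size s) (size t).
Proof.
elim: s t => [|a s IH] [|b t] //=; case: eqP => // _; have := IH t; lia.
Qed.

Lemma lcp_sym s t : lcp s t = lcp t s.
Proof. elim: s t => [|a s IH] [|b t] //=; rewrite eq_sym IH; by []. Qed.

Lemma lcp_nth s t j : j < lcp s t -> nth false s j = nth false t j.
Proof.
elim: s t j => [|a s IH] [|b t] j //=; case: eqP => // -> .
by case: j => //= j; rewrite ltnS; apply: IH.
Qed.

Lemma lcp_ge s t m : m <= size s -> m <= size t ->
  (forall j, j < m -> nth false s j = nth false t j) -> m <= lcp s t.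
Proof.
elim: s t m => [|a s IH] [|b t] [|m] //=; rewrite !ltnS => hs ht H.
have := H 0 erefl; rewrite /= => ->; rewrite eqxx ltnS; apply: IH => // j hj; exact: (H j.+1).
Qed.

Lemma lcp_refl s : lcp s s = size s.
Proof. by elim: s => //= a s ->; rewrite eqxx. Qed.

Lemma lcp_tri s t u : minn (lcp s t) (lcp t u) <= lcp s u.
Proof.
elim: s t u => [|a s IH] [|b t] [|c u] //=; rewrite ?minn0 ?min0n //.
case: (a =P b) => [<-|]; last by rewrite min0n.
case: (a =P c) => _; last by rewrite minn0.
by rewrite minnSS ltnS.
Qed.

Lemma tdist_tri s t u : tdist s u <= tdist s t + tdist t u.
Proof.
rewrite /tdist; have := lcp_tri s t u; have := lcp_size s t; have := lcp_size t u;
have := lcp_size s u; lia.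
Qed.

Lemma tdist_sym s t : tdist s t = tdist t s.
Proof. by rewrite /tdist lcp_sym addnC. Qed.

Lemma lcp_rcons s t b : lcp s t <= lcp (rcons s b) t <= (lcp s t).+1.
Proof.
elim: s t => [|a s IH] [|c t] //=; first by case: (b == c).
by case: (a == c) => //=; rewrite !ltnS.
Qed.

Lemma tdist_rcons s t b : tdist (rcons s b) t <= tdist s t + 1 /\ tdist s t <= tdist (rcons s b) t + 1.
Proof.
rewrite /tdist size_rcons; have := lcp_rcons s t b; have := lcp_size s t;
have := lcp_size (rcons s b) t; rewrite size_rcons; lia.
Qed.

Lemma tdist_bound s t : tdist s t <= size s + size t.
Proof. rewrite /tdist; lia. Qed.

Section Tree.
Variable n : nat.

Lemma tseq_inj : injective (@tseq n).
Proof.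
case=> k t [k' t'] /= E.
have ek : k = k'.
  by apply/val_inj; rewrite /= -(size_tuple t) -(size_tuple t'); move: E; rewrite /tseq /= => ->.
subst k'; congr Tagged; exact: val_inj.
Qed.

Lemma tlen_le (A : Tn n) : tlen A <= n.
Proof. by case: A => k t; rewrite /tlen /tseq /= size_tuple -ltnS ltn_ord. Qed.

Lemma tseq_mkT s : size s <= n -> tseq (mkT n s) = s.
Proof.
move=> hs; rewrite /tseq /mkT /=.
rewrite /mktuple /= /ord_tuple /=.
rewrite -[in RHS](mkseq_nth false s) /mkseq.
rewrite -val_enum_ord -map_comp inordK //.
Qed.
End Tree.

Section Tree2.
Variable n : nat.

Lemma tadj_sym : symmetric (@tadj n).
Proof. by move=> A B; rewrite /tadj orbC. Qed.

Lemma mkT_tseq (A : Tn n) : mkT n (tseq A) = A.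
Proof. by apply: tseq_inj; rewrite tseq_mkT // tlen_le. Qed.

Lemma walk_up s u : size (s ++ u) <= n -> walk (@tadj n) (size u) (mkT n s) (mkT n (s ++ u)).
Proof.
elim: u s => [|b u IH] s /=; first by rewrite cats0.
move=> hs; apply/existsP; exists (mkT n (rcons s b)); apply/andP; split.
  rewrite /tadj; apply/orP; left; apply/existsP; exists b.
  rewrite !tseq_mkT // ?size_rcons; move: hs; rewrite size_cat /=; lia.
have -> : s ++ b :: u = rcons s b ++ u by rewrite cat_rcons.
by apply: IH; rewrite size_cat size_rcons; move: hs; rewrite size_cat /=; lia.
Qed.

Lemma dT_le (A B : Tn n) : walk (@tadj n) (tdist (tseq A) (tseq B)) A B.
Proof.
set s := tseq A; set t := tseq B; set c := lcp s t.
have hcs : c <= minn (size s) (size t) := lcp_size s t.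
have ps : take c t = take c s.
  apply: (@eq_from_nth _ false); rewrite !size_takel; try lia.
  move=> j hj; rewrite !nth_take //; apply/esym/lcp_nth; exact: hj.
have w1 : walk (@tadj n) (size s - c) (mkT n (take c s)) A.
  rewrite -[X in walk _ _ _ X]mkT_tseq -/s -{3}(cat_take_drop c s).
  have -> : size s - c = size (drop c s) by rewrite size_drop.
  by apply: walk_up; rewrite cat_take_drop tlen_le.
have w2 : walk (@tadj n) (size t - c) (mkT n (take c s)) B.
  rewrite -[X in walk _ _ _ X]mkT_tseq -/t -ps -{3}(cat_take_drop c t).
  have -> : size t - c = size (drop c t) by rewrite size_drop.
  by apply: walk_up; rewrite cat_take_drop tlen_le.
have := walk_cat (walk_sym (@tadj_sym) w1) w2.
by have -> : size s - c + (size t - c) = tdist s t by rewrite /tdist; lia.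
Qed.

Lemma dT_tdist (A B : Tn n) : dT A B = tdist (tseq A) (tseq B).
Proof.
apply/eqP; rewrite eqn_leq; apply/andP; split; first exact: gdist_le (dT_le A B).
have w := gdist_walk (dT_le A B).
have := walk_lip (f := fun X => tdist (tseq X) (tseq B)) _ w.
rewrite /tdist lcp_refl /dT; move=> H; rewrite -/(tdist _ _); apply: leq_trans (H _) _.
  move=> X Y; rewrite /tadj => /orP[] /existsP[b /eqP ->]; have := tdist_rcons (tseq X) (tseq B) b;
  have := tdist_rcons (tseq Y) (tseq B) b; rewrite /tdist; lia.
lia.
Qed.
End Tree2.

Section Lamp.
Variable m : nat.
Local Notation N := m.+1.

Definition zp (j : nat) : 'I_N := Ordinal (ltn_pmod j (ltn0Sn m)).

Lemma zp_val (i : 'I_N) : zp i = i.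
Proof. by apply: val_inj; rewrite /= modn_small. Qed.

Lemma zpN a : zp (N + a) = zp a.
Proof. by apply: val_inj; rewrite /= modnDl. Qed.

Lemma gadj_sym : symmetric (@gadj N).
Proof. by move=> p q; rewrite /gadj orbC. Qed.

Definition upd (x : {set 'I_N}) (i : 'I_N) (b : bool) :=
  if (i \in x) == b then x else symdiff x [set i].

Lemma in_symdiff (x : {set 'I_N}) c i :
  (i \in symdiff x [set c]) = if i == c then ~~ (i \in x) else i \in x.
Proof.
rewrite /symdiff !inE; case: (i =P c) => _; case: (i \in x) => //.
Qed.

Lemma in_upd x i b j : (j \in upd x i b) = if j == i then b else j \in x.
Proof.
rewrite /upd; case: eqP => H; rewrite ?in_symdiff; case: (j =P i) => // ->.
  by rewrite H.
by case: (i \in x) H; case: b.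
Qed.

Lemma sweep j e (x z : {set 'I_N}) :
  (forall i : 'I_N, (forall t, t < j -> val i != (e + 1 + t) %% N) -> (i \in z) = (i \in x)) ->
  walk (@gadj N) j ((x, zp e) : Gn N) ((z, zp (e + j)) : Gn N).
Proof.
elim: j e x => [|j IH] e x H /=.
  rewrite addn0 xpair_eqE eqxx andbT; apply/eqP/setP => i; symmetry; by apply: H.
apply/existsP; exists ((upd x (zp e.+1) (zp e.+1 \in z), zp e.+1) : Gn N).
apply/andP; split.
  rewrite /gadj /gstep /=; apply/orP; left; apply/andP; split.
    by apply/eqP/val_inj; rewrite /= -[(e %% N).+1]addn1 modnDml addn1.
  by rewrite /upd; case: ifP => _; rewrite eqxx ?orbT.
rewrite -addSnnS; apply: IH => i Hi; rewrite in_upd.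
case: (i =P zp e.+1) => [->//|ne]; apply: H => -[|t] ht.
  apply/negP => /eqP E; apply: ne; apply: val_inj; by rewrite /= E addn0 addn1.
have := Hi t ht; rewrite (_ : e.+1 + 1 + t = e + 1 + t.+1) //; lia.
Qed.

Lemma rho_upper (x y : {set 'I_N}) (k l : 'I_N) c1 c2 :
  c1 <= k -> c1 <= l -> k + c2 <= N -> l + c2 <= N ->
  (forall i : 'I_N, (i < c1) || (N - c2 <= i) -> (i \in x) = (i \in y)) ->
  rho ((x, k) : Gn N) (y, l) <= (k - c1 + 1) + (N - c2 - c1 + 1) + (N - c2 - l) /\
  rho ((x, k) : Gn N) (y, l) <= (N - c2 - k) + (N - c2 - c1 + 1) + (l - c1 + 1) /\
  walk (@gadj N) ((N - c2 - k) + (N - c2 - c1 + 1) + (l - c1 + 1)) ((x, k) : Gn N) (y, l).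
Proof.
move=> h1 h2 h3 h4 H.
set b := N - c2; set e0 := c1 + m.
have mid : forall z1 z2 : {set 'I_N}, (z1 = x /\ z2 = y) \/ (z1 = y /\ z2 = x) ->
   walk (@gadj N) (b - c1 + 1) ((z1, zp e0) : Gn N) ((z2, zp (N + b)) : Gn N).
  move=> z1 z2 hz.
  have -> : N + b = e0 + (b - c1 + 1) by rewrite /e0 /b; lia.
  apply: sweep => i Hi.
  have : (i < c1) || (N - c2 <= i).
    case: (ltnP i c1) => //= hi; rewrite leqNgt; apply/negP => hib.
    have := Hi (i - c1) _; rewrite /e0.
    have -> : c1 + m + 1 + (i - c1) = N + i by lia.
    rewrite modnDl modn_small // eqxx => F; suff: i - c1 < b - c1 + 1 by move/F. 
    rewrite /b; lia.
  move=> hh; have E := H i hh; by case: hz => -[-> ->]; rewrite E.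
have triv : forall z (a j : nat), walk (@gadj N) j ((z, zp a) : Gn N) ((z, zp (a + j)) : Gn N).
  by move=> z a j; apply: sweep.
split.
  have w1 : walk (@gadj N) (k - c1 + 1) ((x, k) : Gn N) ((x, zp e0) : Gn N).
    apply: (walk_sym gadj_sym); have := triv x e0 (k - c1 + 1).
    have -> : e0 + (k - c1 + 1) = N + k by rewrite /e0; lia.
    by rewrite zpN zp_val.
  have w3 : walk (@gadj N) (b - l) ((y, zp (N + b)) : Gn N) ((y, l) : Gn N).
    apply: (walk_sym gadj_sym); have := triv y (N + l) (b - l).
    have -> : N + l + (b - l) = N + b by rewrite /b; lia.
    by rewrite zpN zp_val.
  exact: gdist_le (walk_cat (walk_cat w1 (mid x y (or_introl (conj erefl erefl)))) w3).
have w1 : walk (@gadj N) (b - k) ((x, k) : Gn N) ((x, zp (N + b)) : Gn N).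
  have := triv x k (b - k).
  have -> : k + (b - k) = b by rewrite /b; lia.
  by rewrite zpN zp_val.
have w3 : walk (@gadj N) (l - c1 + 1) ((y, zp e0) : Gn N) ((y, l) : Gn N).
  have := triv y e0 (l - c1 + 1).
  have -> : e0 + (l - c1 + 1) = N + l by rewrite /e0; lia.
  by rewrite zpN zp_val.
have w2 := walk_sym gadj_sym (mid y x (or_intror (conj erefl erefl))).
have ww := walk_cat (walk_cat w1 w2) w3.
by split; [exact: gdist_le ww | exact: ww].
Qed.

Lemma conn (p q : Gn N) : walk (@gadj N) (rho p q) p q.
Proof.
case: p q => x k [y l].
have h3 : k + 0 <= N by rewrite addn0 ltnW.
have h4 : l + 0 <= N by rewrite addn0 ltnW.
have H : forall i : 'I_N, (i < 0) || (N - 0 <= i) -> (i \in x) = (i \in y).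
  by move=> i; rewrite ltn0 subn0 leqNgt ltn_ord.
have [_ [_ w]] := @rho_upper x y k l 0 0 (leq0n _) (leq0n _) h3 h4 H.
exact: gdist_walk w.
Qed.

Definition A1 (p : Gn N) := [seq memZ p.1 j | j <- iota 0 p.2].
Definition A2 (p : Gn N) := [seq memZ p.1 (N - i) | i <- iota 1 (N - p.2)].

Lemma size_A1 (p : Gn N) : size (A1 p) = p.2.
Proof. by rewrite size_map size_iota. Qed.
Lemma size_A2 (p : Gn N) : size (A2 p) = N - p.2.
Proof. by rewrite size_map size_iota. Qed.

Lemma tseq_phi1 (p : Gn N) : tseq (phi1 p).1 = A1 p /\ tseq (phi1 p).2 = A2 p.
Proof.
split; rewrite /phi1 /= tseq_mkT // -?/(A1 p) -?/(A2 p) ?size_A1 ?size_A2 //.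
  by rewrite ltnW.
exact: leq_subr.
Qed.

Lemma memZ_val (x : {set 'I_N}) (i : 'I_N) : memZ x i = (i \in x).
Proof.
apply/existsP/idP => [[i' /andP[/eqP E h]]|h]; last by exists i; rewrite eqxx.
by have <- : i' = i by apply: val_inj.
Qed.

Lemma memZ_zp (x : {set 'I_N}) j : j < N -> memZ x j = (zp j \in x).
Proof. by move=> hj; rewrite -memZ_val /= modn_small. Qed.

Lemma nth_A1 (p : Gn N) j : j < p.2 -> nth false (A1 p) j = memZ p.1 j.
Proof. by move=> hj; rewrite (nth_map 0) ?size_iota // nth_iota. Qed.

Lemma nth_A2 (p : Gn N) t : t < N - p.2 -> nth false (A2 p) t = memZ p.1 (N - t.+1).
Proof. by move=> hj; rewrite (nth_map 0) ?size_iota // nth_iota // add1n. Qed.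

Lemma phi1_inj : injective (@phi1 N).
Proof.
move=> [x k] [y l] E.
have [e1 e2] := tseq_phi1 (x, k); have [f1 f2] := tseq_phi1 (y, l).
have E1 : A1 (x, k) = A1 (y, l) by rewrite -e1 -f1 E.
have E2 : A2 (x, k) = A2 (y, l) by rewrite -e2 -f2 E.
have ekl : k = l by apply: val_inj; have := congr1 size E1; rewrite !size_A1.
subst l; congr pair; apply/setP => i.
case: (ltnP i k) => hi.
  by have := congr1 (nth false ^~ i) E1; rewrite !nth_A1 //= !memZ_val.
have hi' : N - i.+1 < N - k by have := ltn_ord i; lia.
have := congr1 (nth false ^~ (N - i.+1)) E2; rewrite !nth_A2 //=.
have -> : N - (N - i.+1).+1 = i by have := ltn_ord i; lia.
by rewrite !memZ_val.
Qed.

Lemma gstep_cases (p q : Gn N) : gstep p q ->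
  (p.2 < m /\ (q.2 : nat) = p.2.+1) \/ ((p.2 : nat) = m /\ (q.2 : nat) = 0).
Proof.
case/andP => /eqP -> _ /=; case: (ltnP p.2 m) => h.
  by left; rewrite modn_small.
have e : (p.2 : nat) = m by have := ltn_ord p.2; lia.
by right; rewrite e modnn.
Qed.

Definition g (p : Gn N) := minn p.2 (m - p.2).

Lemma g_lip (p q : Gn N) : gadj p q -> g p <= g q + 1.
Proof.
rewrite /g; case/orP => /gstep_cases[] [h1 h2]; rewrite ?h1 ?h2; lia.
Qed.

Lemma memZ_step (p q : Gn N) j : gstep p q -> j != (q.2 : nat) -> memZ q.1 j = memZ p.1 j.
Proof.
case/andP => _ /orP[/eqP->//|/eqP->] hj.
apply: eq_existsb => i; case: (val i =P j) => //= E.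
rewrite /symdiff !inE; have : i != q.2 by apply/eqP => E'; move: hj; rewrite -E E' eqxx.
by move/negbTE ->; case: (i \in p.1).
Qed.

Lemma step_bound (p q : Gn N) : gstep p q -> p.2 < m ->
  tdist (A1 p) (A1 q) <= 3 /\ tdist (A2 p) (A2 q) <= 3.
Proof.
move=> st hm; have [[_ hq]|[h _]] := gstep_cases st; last by move: hm; rewrite h ltnn.
split.
  have : p.2 <= lcp (A1 p) (A1 q).
    apply: lcp_ge; rewrite ?size_A1 ?hq // => j hj.
    rewrite nth_A1 // nth_A1 ?hq; last lia.
    rewrite (memZ_step st) ?hq //; lia.
  rewrite /tdist !size_A1 hq; have := lcp_size (A1 p) (A1 q); rewrite !size_A1 hq; lia.
have : m - p.2 - 1 <= lcp (A2 p) (A2 q).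
  apply: lcp_ge; rewrite ?size_A2 ?hq; try lia.
  move=> j hj; rewrite !nth_A2 ?hq; try lia.
  rewrite (memZ_step st) // hq; lia.
rewrite /tdist !size_A2 hq; have := lcp_size (A2 p) (A2 q); rewrite !size_A2 hq; lia.
Qed.

Lemma claim j (a c : Gn N) : walk (@gadj N) j a c ->
  (tdist (A1 a) (A1 c) <= 3 * j /\ tdist (A2 a) (A2 c) <= 3 * j) \/ g a + g c <= j.
Proof.
elim: j a => [|j IH] a /=.
  by move/eqP->; left; rewrite /tdist !lcp_refl; lia.
case/existsP => z /andP[az wz].
have gl := walk_lip g_lip (walk_sym gadj_sym wz).
have g1 := g_lip az; have g2 := g_lip (_ : gadj z a); rewrite gadj_sym in g2.
have {}g2 := g2 az.
case: (IH _ wz) => [[d1 d2]|hh]; last first.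
  by right; lia.
case: (g a =P 0) => ga; first by right; lia.
case: (g z =P 0) => gz; first by right; lia.
left.
have [s1 s2] : tdist (A1 a) (A1 z) <= 3 /\ tdist (A2 a) (A2 z) <= 3.
  case/orP: az => st.
    by apply: step_bound => //; move: ga; rewrite /g; have := ltn_ord a.2; lia.
  rewrite tdist_sym (tdist_sym (A2 a)); apply: step_bound => //.
  by move: gz; rewrite /g; have := ltn_ord z.2; lia.
have := tdist_tri (A1 a) (A1 z) (A1 c); have := tdist_tri (A2 a) (A2 z) (A2 c); lia.
Qed.
End Lamp.

Lemma tdist0 s t : tdist s t = 0 -> s = t.
Proof.
rewrite /tdist => h; have := lcp_size s t => hs.
apply: (@eq_from_nth _ false); first lia.
move=> j hj; apply: lcp_nth; lia.
Qed.

Theorem mainTheorem3 (n : nat) (hn : 6 <= n) (h6 : 6 %| n) :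
  [/\ (* phi_{1,n} : P_{1,n} -> W_n is a bijection *)
      (forall p : Gn n, P1n p -> Wn (phi1 p)),
      {in @P1n n &, injective (@phi1 n)},
      (forall w : Tn n * Tn n, Wn w -> exists2 p : Gn n, P1n p & phi1 p = w),
      (* the two distortion bounds *)
      (forall p q : Gn n, P1n p -> P1n q ->
         rho p q <= 2 + 2 * dinf (phi1 p) (phi1 q)
         /\ dinf (phi1 p) (phi1 q) <= 6 * rho p q + 12)
    & (* consequence: rho/4 <= d_inf o (phi x phi) <= 18 rho *)
      (forall p q : Gn n, P1n p -> P1n q ->
         rho p q <= 4 * dinf (phi1 p) (phi1 q)
         /\ dinf (phi1 p) (phi1 q) <= 18 * rho p q)].
Proof.
case: n hn h6 => [//|m] hn h6.
set t := m.+1 %/ 6.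
have ht : m.+1 = 6 * t by rewrite /t mulnC divnK.
have iP : forall k, inP1 m.+1 k = (t <= k <= 5 * t) by [].
have dinfE : forall p q : Gn m.+1, dinf (phi1 p) (phi1 q) =
    maxn (tdist (A1 p) (A1 q)) (tdist (A2 p) (A2 q)).
  move=> p q; rewrite /dinf !dT_tdist.
  by have [-> ->] := tseq_phi1 p; have [-> ->] := tseq_phi1 q.
have part4 : forall p q : Gn m.+1, P1n p -> P1n q ->
         rho p q <= 2 + 2 * dinf (phi1 p) (phi1 q)
         /\ dinf (phi1 p) (phi1 q) <= 6 * rho p q + 12.
  move=> [x k] [y l]; rewrite /P1n !iP /= => hk hl.
  rewrite dinfE; split.
    set c1 := lcp (A1 (x, k)) (A1 (y, l)); set c2 := lcp (A2 (x, k)) (A2 (y, l)).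
    have s1 : c1 <= minn k l by have := lcp_size (A1 (x, k)) (A1 (y, l)); rewrite !size_A1.
    have s2 : c2 <= minn (m.+1 - k) (m.+1 - l).
      by have := lcp_size (A2 (x, k)) (A2 (y, l)); rewrite !size_A2.
    have hk' := ltn_ord k; have hl' := ltn_ord l.
    have H : forall i : 'I_m.+1, (i < c1) || (m.+1 - c2 <= i) -> (i \in x) = (i \in y).
      move=> i /orP[] hi.
        have := lcp_nth hi; rewrite !nth_A1 /=; try lia.
        by rewrite !memZ_val.
      have hi' : m.+1 - i.+1 < c2 by have := ltn_ord i; lia.
      have := lcp_nth hi'; rewrite !nth_A2 /=; try lia.
      have -> : m.+1 - (m.+1 - i.+1).+1 = i by have := ltn_ord i; lia.
      by rewrite !memZ_val.
    have h3 : k + c2 <= m.+1 by lia.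
    have h4 : l + c2 <= m.+1 by lia.
    have [r1 [r2 _]] := @rho_upper m x y k l c1 c2 (leq_trans s1 (geq_minl _ _))
      (leq_trans s1 (geq_minr _ _)) h3 h4 H.
    rewrite /tdist !size_A1 !size_A2 /= -/c1 -/c2; lia.
  have w := conn (x, k) (y, l).
  case: (claim w) => [[d1 d2]|hg].
    by move: d1 d2; set r := rho _ _; set u := tdist _ _; set v := tdist _ _; lia.
  move: hg; rewrite /g /=.
  have := tdist_bound (A1 (x, k)) (A1 (y, l)); have := tdist_bound (A2 (x, k)) (A2 (y, l)).
  rewrite !size_A1 !size_A2 /=; have := ltn_ord k; have := ltn_ord l; lia.
have inj : forall p q : Gn m.+1, dinf (phi1 p) (phi1 q) = 0 -> p = q.
  move=> p q; rewrite dinfE => h; apply: phi1_inj.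
  have [e1 e2] := tseq_phi1 p; have [f1 f2] := tseq_phi1 q.
  have E1 : A1 p = A1 q by apply: tdist0; lia.
  have E2 : A2 p = A2 q by apply: tdist0; lia.
  rewrite [phi1 p]surjective_pairing [phi1 q]surjective_pairing; congr pair; apply: tseq_inj.
    by rewrite e1 f1.
  by rewrite e2 f2.
split.
- move=> [x k]; rewrite /P1n /Wn /tlen; have [-> ->] := tseq_phi1 (x, k).
  rewrite size_A1 size_A2 !iP /=; have := ltn_ord k; lia.
- by move=> p q _ _; apply: phi1_inj.
- move=> [W1 W2]; rewrite /Wn !iP /= => hw.
  have hs1 : tlen W1 < m.+1 by lia.
  pose x := [set i : 'I_m.+1 | if i < tlen W1 then nth false (tseq W1) i
                              else nth false (tseq W2) (m.+1 - i.+1)].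
  exists (x, zp m (tlen W1)); first by rewrite /P1n iP /= modn_small //; lia.
  rewrite [phi1 _]surjective_pairing; congr pair; apply: tseq_inj.
    have [-> _] := tseq_phi1 (x, zp m (tlen W1)).
    apply: (@eq_from_nth _ false); rewrite size_A1 /= modn_small //.
    move=> j hj; rewrite nth_A1 /= ?modn_small // memZ_zp; last lia.
    by rewrite inE /= modn_small ?hj //; lia.
  have [_ ->] := tseq_phi1 (x, zp m (tlen W1)).
  apply: (@eq_from_nth _ false); rewrite size_A2 /= modn_small //; first by rewrite /tlen in hw *; lia.
  move=> j hj; rewrite nth_A2 /= ?modn_small //.
  rewrite memZ_zp; last lia.
  rewrite inE /= modn_small; last lia.
  have -> : (m.+1 - j.+1 < tlen W1) = false by apply/negbTE; rewrite -leqNgt; lia.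
  by have -> : m.+1 - (m.+1 - j.+1).+1 = j by lia.
- exact: part4.
move=> p q hp hq; have [a b] := part4 p q hp hq.
case: (dinf (phi1 p) (phi1 q) =P 0) => d0.
  have e := inj p q d0; subst q; rewrite d0.
  by have := gdist_le (_ : walk (@gadj m.+1) 0 p p); rewrite /rho; move/(_ (eqxx _)); lia.
case: (rho p q =P 0) => r0.
  by have := conn p q; rewrite r0 /= => /eqP e; subst q; exfalso; apply: d0; rewrite dinfE /tdist !lcp_refl; lia.
lia.
Qed.
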